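(* Let $x_1,\ldots,x_m$ be arbitrary positive integers and let $ES(x_1,\ldots,x_m)$ denote the number of sign vectors $(\varepsilon_1,\ldots,\varepsilon_m)\in\{-1,1\}^m$ with $\sum_{i=1}^m\varepsilon_i x_i=0$. Then $$ES(x_1,\ldots,x_m)\le 2^m\left(\frac{(2m-1)!!}{(2m)!!}\right)^{1/2}=\left(2\binom{2m-1}{m}\right)^{1/2}.$$ In particular, for every positive integer $m$, $J_m\le\left(2\binom{2m+1}{m+1}\right)^{1/2}$, where $J_m$ is the number of $(\delta_0,\ldots,\delta_m)\in\{-1,1\}^{m+1}$ with $\sum_{i=0}^m\delta_i\binom{m}{i}=0$.
   Context: $k!!$ denotes the double factorial, the product of all positive integers $\le k$ having the same parity as $k$. *)

(* Defs.v *)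
From HB Require Import structures.
From mathcomp Require Import all_boot all_order all_algebra.
Set Implicit Arguments. Unset Strict Implicit. Unset Printing Implicit Defensive.
Import Order.TTheory GRing.Theory Num.Theory.

Fixpoint dfact (k : nat) : nat :=
  match k with
  | 0 => 1
  | 1 => 1
  | (k'.+2) as n => n * dfact k'
  end.

(* A sign vector in {-1,1}^n is encoded by e : {ffun 'I_n -> bool},
   with coordinate i equal to (-1)^(e i), i.e. true |-> -1, false |-> 1. *)
Definition sgn (b : bool) : int := if b then (-1)%R else 1%R.

Definition ES (m : nat) (x : 'I_m -> nat) : nat :=
  #|[set e : {ffun 'I_m -> bool} | (\sum_(i < m) sgn (e i) * (x i)%:Z == 0)%R]|.

Definition J (m : nat) : nat :=
  #|[set e : {ffun 'I_m.+1 -> bool} |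
      (\sum_(i < m.+1) sgn (e i) * ('C(m, i))%:Z == 0)%R]|.

(* Main.v *)
Require Import Defs.
From HB Require Import structures.
From mathcomp Require Import all_boot all_order all_algebra.
From mathcomp Require Import zify ring lra.
Import Order.TTheory GRing.Theory Num.Theory.

Lemma lym (T : finType) n : forall (X : {set T}) (A : {set {set T}}),
  #|X| = n -> (forall S, S \in A -> S \subset X) ->
  (forall S S', S \in A -> S' \in A -> S \subset S' -> S = S') ->
  \sum_(S in A) #|S|`! * (n - #|S|)`! <= n`!.
Proof.
elim: n => [|n IH] X A cX sub anti.
  case XA: (X \in A).
    have -> : \sum_(S in A) #|S|`! * (0 - #|S|)`! = \sum_(S in pred1 X) #|S|`! * (0 - #|S|)`!.
      apply: eq_bigl => S; apply/idP/eqP => [SA|->] //; exact: anti (sub S SA).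
    by rewrite big_pred1_eq cX.
  rewrite big1 // => S SA; exfalso.
  move: cX => /eqP; rewrite cards_eq0 => /eqP X0.
  by have := sub S SA; rewrite X0 subset0 => /eqP S0; rewrite X0 -S0 SA in XA.
case XA: (X \in A).
  have -> : \sum_(S in A) #|S|`! * (n.+1 - #|S|)`! = \sum_(S in pred1 X) #|S|`! * (n.+1 - #|S|)`!.
    apply: eq_bigl => S; apply/idP/eqP => [SA|->] //; exact: anti (sub S SA).
  by rewrite big_pred1_eq cX subnn muln1.
pose g (S : {set T}) := #|S|`! * (n - #|S|)`!.
have step : forall S, S \in A -> #|S|`! * (n.+1 - #|S|)`! = \sum_(x in X) (x \notin S) * g S.
  move=> S SA.
  have pS : S \proper X by rewrite properEneq sub // andbT; apply/eqP => eSX; rewrite -eSX SA in XA.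
  have lt : #|S| < n.+1 by rewrite -cX proper_card.
  have -> : \sum_(x in X) (x \notin S) * g S = \sum_(x in X :\: S) g S.
    rewrite big_mkcond [RHS]big_mkcond; apply: eq_bigr => y _; rewrite !inE.
    by case: (y \in X); case: (y \in S) => //=; rewrite mul1n.
  rewrite sum_nat_const cardsD (setIidPr (sub S SA)) cX /g subSn // factS; ring.
rewrite (eq_bigr _ step) exchange_big /=.
apply: (@leq_trans (\sum_(x in X) n`!)); last by rewrite sum_nat_const cX factS.
apply: leq_sum => x xX.
have -> : \sum_(S in A) (x \notin S) * g S = \sum_(S in [set S in A | x \notin S]) g S.
  rewrite big_mkcond [RHS]big_mkcond /=; apply: eq_bigr => S _.
  by rewrite !inE; case: (S \in A); case: (x \in S) => //=; rewrite mul1n.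
apply: (IH (X :\ x)).
- by move: cX; rewrite (cardsD1 x X) xX => -[].
- by move=> S; rewrite !inE subsetD1 => /andP[SA ->]; rewrite sub.
- by move=> S S'; rewrite !inE => /andP[SA _] /andP[S'A _]; exact: anti.
Qed.

Lemma sum_split m (x : 'I_m -> nat) (e : {ffun 'I_m -> bool}) :
  (\sum_(i < m) sgn (e i) * (x i)%:Z =
   (\sum_(i | ~~ e i) x i)%N%:Z - (\sum_(i | e i) x i)%N%:Z)%R.
Proof.
rewrite (bigID (fun i => e i)) /= addrC !(big_morph Posz PoszD (erefl (Posz 0))) -sumrN; congr (_ + _)%R.
  by apply: eq_bigr => i /negbTE ->; rewrite mul1r.
by apply: eq_bigr => i ->; rewrite mulN1r.
Qed.

Lemma zero_eq m (x : 'I_m -> nat) (e : {ffun 'I_m -> bool}) :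
  (\sum_(i < m) sgn (e i) * (x i)%:Z == 0)%R ->
  \sum_(i | e i) x i = \sum_(i | ~~ e i) x i.
Proof. by rewrite sum_split subr_eq0 => /eqP [->]. Qed.

Lemma key m (x : 'I_m -> nat) (e e' : {ffun 'I_m -> bool}) :
  (forall i, 0 < x i) ->
  (\sum_(i < m) sgn (e i) * (x i)%:Z == 0)%R ->
  (\sum_(i < m) sgn (e' i) * (x i)%:Z == 0)%R ->
  (forall i, e i -> e' i) -> forall i, e' i -> e i.
Proof.
move=> xp /zero_eq z /zero_eq z' ee' i e'i.
have t1 : \sum_i x i = \sum_(i | e i) x i + \sum_(i | ~~ e i) x i by rewrite (bigID (fun i => e i)).
have t2 : \sum_i x i = \sum_(i | e' i) x i + \sum_(i | ~~ e' i) x i by rewrite (bigID (fun i => e' i)).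
have t3 : \sum_(i | e' i) x i = \sum_(i | e' i && e i) x i + \sum_(i | e' i && ~~ e i) x i by rewrite (bigID (fun i => e i)).
have t4 : \sum_(i | e' i && e i) x i = \sum_(i | e i) x i.
  by apply: eq_bigl => j; case ej: (e j); rewrite ?andbF ?andbT // ee'.
rewrite t4 in t3.
case ei: (e i) => //.
have : x i <= \sum_(i | e' i && ~~ e i) x i.
  by rewrite (bigD1 i) /= ?e'i ?ei // leq_addr.
move: (xp i); simpl in *; lia.
Qed.

Lemma ES_max m (x : 'I_m -> nat) : (forall i, 0 < x i) -> ES x <= \max_(j < m.+1) 'C(m, j).
Proof.
move=> xp.
pose P := [set e : {ffun 'I_m -> bool} | (\sum_(i < m) sgn (e i) * (x i)%:Z == 0)%R].
pose f (e : {ffun 'I_m -> bool}) := [set i | e i].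
have finj : injective f.
  move=> e e' /setP H; apply/ffunP => i; move: (H i); rewrite !inE.
  by case: (e i); case: (e' i).
rewrite /ES -/P -(card_imset P finj).
set A := f @: P.
set M := \max_(j < m.+1) 'C(m, j).
have HL : \sum_(S in A) #|S|`! * (m - #|S|)`! <= m`!.
  apply: (@lym _ m [set: 'I_m]); first by rewrite cardsT card_ord.
    by move=> S _; exact: subsetT.
  move=> S S' /imsetP[e eP ->] /imsetP[e' e'P ->] sub.
  rewrite inE in eP; rewrite inE in e'P.
  have ee' : forall j, e j -> e' j.
    by move=> j ej; have := subsetP sub j; rewrite !inE; apply.
  apply/setP => i; rewrite !inE; apply/idP/idP; first exact: ee'.
  exact: (key _ _ _ _ xp eP e'P ee').
have : #|A| * m`! <= M * m`!.
  rewrite -sum_nat_const.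
  apply: (@leq_trans (\sum_(S in A) M * (#|S|`! * (m - #|S|)`!))).
    apply: leq_sum => S _.
    have cS : #|S| <= m by have := max_card S; rewrite card_ord.
    rewrite -{1}(bin_fact cS) leq_mul2r; apply/orP; right.
    have := @bigop.leq_bigmax _ (fun j : 'I_m.+1 => 'C(m, j)) (inord #|S|).
    by rewrite inordK // ltnS.
  by rewrite -big_distrr /= leq_mul2l HL orbT.
by rewrite leq_pmul2r ?fact_gt0.
Qed.

Lemma ES_sq m (x : 'I_m -> nat) : (forall i, 0 < x i) -> ES x * ES x <= 'C(2 * m, m).
Proof.
move=> xp.
have E := ES_max _ _ xp.
have [j0 Ej0] := @bigop.eq_bigmax _ (fun j : 'I_m.+1 => 'C(m, j)) (ltac:(by rewrite card_ord) : 0 < #|'I_m.+1|).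
rewrite Ej0 in E.
apply: (@leq_trans ('C(m, j0) * 'C(m, j0))); first exact: leq_mul.
rewrite mul2n -addnn -binomial.Vandermonde (bigD1 j0) //= bin_sub ?leq_addr //.
by rewrite -ltnS.
Qed.
Local Open Scope ring_scope.

Lemma dfact_2 m : dfact (2 * m) = (2 ^ m * m`!)%N.
Proof.
elim: m => [|m IH] //.
have -> : (2 * m.+1 = (2 * m).+2)%N by lia.
have -> : dfact (2 * m).+2 = ((2 * m).+2 * dfact (2 * m))%N by [].
rewrite IH expnS factS; lia.
Qed.

Lemma dfact_pair k : (dfact k.+1 * dfact k = k.+1`!)%N.
Proof.
elim: k => [|k IH] //.
have -> : dfact k.+2 = (k.+2 * dfact k)%N by [].
by rewrite -mulnA (mulnC (dfact k)) IH -factS.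
Qed.

Lemma bin_half m : (0 < m)%N -> (2 * 'C(2 * m - 1, m) = 'C(2 * m, m))%N.
Proof.
case: m => [|m] // _.
have -> : (2 * m.+1 = (2 * m).+1.+1)%N by lia.
have -> : ((2 * m).+2 - 1 = (2 * m).+1)%N by lia.
rewrite (binS (2 * m).+1 m).
have H : (m.+1 <= (2 * m).+1)%N by lia.
have := bin_sub H.
have -> : ((2 * m).+1 - m.+1 = m)%N by lia.
move=> ->; lia.
Qed.

Lemma eqpart (R : rcfType) m : (0 < m)%N ->
  2 ^+ m * Num.sqrt ((dfact (2 * m - 1))%:R / (dfact (2 * m))%:R :> R)
  = Num.sqrt (2 * ('C(2 * m - 1, m))%:R).
Proof.
move=> m0.
have Hp : (dfact (2 * m - 1) * dfact (2 * m) = (2 * m)`!)%N.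
  have e : (2 * m = (2 * m - 1).+1)%N by lia.
  set k := (2 * m - 1)%N in e *; rewrite e mulnC; exact: dfact_pair.
have Hb : ('C(2 * m, m) * (m`! * m`!) = (2 * m)`!)%N.
  have := @bin_fact (2 * m) m; have -> : (2 * m - m = m)%N by lia.
  apply; lia.
set c : R := ('C(2 * m, m))%:R.
set F : R := (m`!)%:R.
set d : R := (dfact (2 * m))%:R.
set num : R := (dfact (2 * m - 1))%:R.
have Fnz : F != 0 by rewrite pnatr_eq0 -lt0n fact_gt0.
have Hd : d = 2 ^+ m * F by rewrite /d dfact_2 natrM natrX.
have dnz : d != 0 by rewrite Hd mulf_neq0 // expf_neq0 // pnatr_eq0.
have Hnum : num = c * (F * F) / d.
  apply: (mulIf dnz); rewrite mulfVK // /num /d /c /F -!natrM Hp Hb //.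
have -> : 2 * ('C(2 * m - 1, m))%:R = c :> R by rewrite /c -bin_half // natrM.
have -> : num / d = c * ((2 ^+ m)^-1) ^+ 2.
  rewrite Hnum Hd; field; rewrite Fnz expf_neq0 // pnatr_eq0 //.
rewrite sqrtrM ?ler0n // sqrtr_sqr ger0_norm ?invr_ge0 ?exprn_ge0 ?ler0n //.
rewrite mulrCA mulfV ?mulr1 // expf_neq0 // pnatr_eq0 //.
Qed.
Local Open Scope ring_scope.

Theorem theorem3 (R : rcfType) :
  (forall (m : nat) (x : 'I_m -> nat),
      (0 < m)%N -> (forall i, (0 < x i)%N) ->
      (ES x)%:R <= 2 ^+ m * Num.sqrt ((dfact (2 * m - 1))%:R / (dfact (2 * m))%:R :> R)
      /\ 2 ^+ m * Num.sqrt ((dfact (2 * m - 1))%:R / (dfact (2 * m))%:R :> R)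
         = Num.sqrt (2 * ('C(2 * m - 1, m))%:R))
  /\ (forall m : nat, (0 < m)%N ->
      (J m)%:R <= Num.sqrt (2 * ('C(2 * m + 1, m + 1))%:R : R)).
Proof.
have P1 : forall (m : nat) (x : 'I_m -> nat),
      (0 < m)%N -> (forall i, (0 < x i)%N) ->
      (ES x)%:R <= 2 ^+ m * Num.sqrt ((dfact (2 * m - 1))%:R / (dfact (2 * m))%:R :> R)
      /\ 2 ^+ m * Num.sqrt ((dfact (2 * m - 1))%:R / (dfact (2 * m))%:R :> R)
         = Num.sqrt (2 * ('C(2 * m - 1, m))%:R).
  move=> m x m0 xp; split; last exact: eqpart.
  rewrite eqpart // -natrM bin_half //.
  have -> : (ES x)%:R = Num.sqrt ((ES x * ES x)%N%:R : R).
    by rewrite natrM -expr2 sqrtr_sqr ger0_norm ?ler0n.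
  by rewrite ler_sqrt ?ler0n // ler_nat; exact: ES_sq.
split => // m m0.
have -> : J m = ES (fun i : 'I_m.+1 => 'C(m, i)) by [].
have pos : forall i : 'I_m.+1, (0 < 'C(m, i))%N by move=> i; rewrite bin_gt0 -ltnS ltn_ord.
have [H _] := P1 m.+1 (fun i : 'I_m.+1 => 'C(m, i)) (ltn0Sn m) pos.
rewrite eqpart // in H.
have e1 : (2 * m.+1 - 1 = 2 * m + 1)%N by lia.
rewrite e1 in H; rewrite !addn1 in H *; exact: H.
Qed.
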